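(* Let $X$ be a $T_1$ topological space. (i) A nonzero ideal $I$ of $C_c(X)_F$ is minimal if and only if $I$ is generated by $\chi_{\{a\}}$ for some $a\in X$. (ii) A nonzero ideal $I$ of $C_c(X)_F$ is minimal if and only if $|Z[I]|=2$. (iii) The socle of $C_c(X)_F$ is the set of all $f\in C_c(X)_F$ such that $X\setminus Z(f)$ is finite. (iv) The socle of $C_c(X)_F$ is an essential ideal and $\bigcap_{f\in \mathrm{Soc}}Z(f)=\emptyset$.
   Context: $C_c(X)_F$ denotes the set of all functions $f:X\to\mathbb{R}$ whose range is countable and whose set of points of discontinuity is finite; it is a commutative ring with unity under pointwise operations. $Z(f)=\{x:f(x)=0\}$, $Z[I]=\{Z(f):f\in I\}$. $\chi_{\{a\}}$ is the function equal to $1$ at $a$ and $0$ elsewhere. The socle $\mathrm{Soc}$ of a commutative ring is the sum of all its minimal ideals. An ideal is essential if it meets every nonzero ideal nontrivially. *)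

(* Defs.v *)
From HB Require Import structures.
From mathcomp Require Import all_boot all_order all_algebra.
From mathcomp Require Import all_classical all_reals.
From mathcomp Require Import topology normedtype.
Import numFieldNormedType.Exports.
Set Implicit Arguments. Unset Strict Implicit. Unset Printing Implicit Defensive.
Import Order.TTheory GRing.Theory Num.Theory.
Local Open Scope classical_set_scope.
Local Open Scope ring_scope.

Section CcF.
Variables (X : topologicalType) (R : realType).

Definition CcF : set (X -> R) :=
  [set f : X -> R | countable (range f) /\ finite_set [set x | ~ {for x, continuous (f : X -> R)}]].

Definition Z (f : X -> R) : set X := [set x | f x = 0].

Definition ZI (I : set (X -> R)) : set (set X) := Z @` I.

Definition chi (a : X) : X -> R := fun x => if pselect (x = a) then 1 else 0.

Definition ideal (I : set (X -> R)) : Prop :=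
  [/\ I `<=` CcF, I (fun _ => 0),
      (forall f g, I f -> I g -> I (f \- g)) &
      (forall f g, CcF f -> I g -> I (f \* g))].

Definition nonzero_ideal (I : set (X -> R)) : Prop :=
  ideal I /\ I <> [set (fun _ : X => 0 : R)].

Definition minimal_ideal (I : set (X -> R)) : Prop :=
  nonzero_ideal I /\ (forall J, nonzero_ideal J -> J `<=` I -> J = I).

Definition gen_ideal (S : set (X -> R)) : set (X -> R) :=
  \bigcap_(J in [set J | ideal J /\ S `<=` J]) J.

(* socle: the sum of all minimal ideals, i.e. the ideal generated by their union *)
Definition socle : set (X -> R) :=
  gen_ideal (\bigcup_(I in minimal_ideal) I).

Definition essential_ideal (I : set (X -> R)) : Prop :=
  ideal I /\ forall J, nonzero_ideal J -> exists f, I f /\ J f /\ f <> (fun _ => 0).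

End CcF.

(* Main.v *)
Require Import Defs.
From HB Require Import structures.
From mathcomp Require Import all_boot all_order all_algebra.
From mathcomp Require Import all_classical all_reals.
From mathcomp Require Import topology normedtype.
Import numFieldNormedType.Exports.
Import Order.TTheory GRing.Theory Num.Theory.
Local Open Scope classical_set_scope.
Local Open Scope ring_scope.
Lemma fs_CcF (X:topologicalType) (R:realType) (hT1: accessible_space X) (f : X -> R) :
  finite_set (~` Z f) -> CcF f.
Proof.
move=> fin; split.
- apply: finite_set_countable.
  apply: (@sub_finite_set _ _ ([set 0] `|` (f @` (~` Z f)))).
    move=> _ [x _ <-]; case: (pselect (f x = 0)) => [->|h]; [by left|by right; exists x].
  by rewrite finite_setU; split; [exact: finite_set1| exact: finite_image].
- apply: (sub_finite_set _ fin) => x ncont fx0; apply: ncont.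
  have cl := (@accessible_finite_set_closed X).1 hT1 _ fin.
  have op : open (Z f) by rewrite -[Z f]setCK; exact: closed_openC.
  apply: cvg_near_cst; rewrite fx0.
  exact: (@open_nbhs_nbhs _ x (Z f) (conj op fx0)).
Qed.

Section S.
Variables (X : topologicalType) (R : realType) (hT1 : accessible_space X).

Local Notation ch := (@chi X R).
Definition L (a : X) : set (X -> R) := [set f | exists c : R, f = (fun x => c * ch a x)].

Lemma chia (a : X) : ch a a = 1.
Proof. by rewrite /chi; case: pselect. Qed.

Lemma chin (a x : X) : x <> a -> ch a x = 0.
Proof. by rewrite /chi; case: pselect. Qed.

Lemma cst_CcF (c : R) : CcF (fun _ : X => c).
Proof.
split.
  apply: finite_set_countable; apply: (@sub_finite_set _ _ [set c]).
    by move=> _ [x _ <-].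
  exact: finite_set1.
rewrite (_ : [set x | _] = set0) //; apply/seteqP; split => // x /= []. 
exact: cst_continuous.
Qed.

Lemma L_fs a f : L a f -> finite_set (~` Z f).
Proof.
move=> [c ->]; apply: (@sub_finite_set _ _ [set a]); last exact: finite_set1.
move=> x /= nz; apply: contrapT => xa; apply: nz; rewrite /Z /= chin ?mulr0 //.
Qed.

Lemma L_CcF a f : L a f -> CcF f.
Proof. by move=> /L_fs; exact: fs_CcF. Qed.

Lemma chi_L a : L a (ch a).
Proof. by exists 1; apply/funext => x; rewrite mul1r. Qed.

Lemma chi_CcF a : CcF (ch a).
Proof. exact/L_CcF/chi_L. Qed.

Lemma L_ideal a : ideal (L a).
Proof.
split.
- by move=> f; exact: L_CcF.
- by exists 0; apply/funext => x; rewrite mul0r.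
- move=> f g [c ->] [d ->]; exists (c - d); apply/funext => x /=; by rewrite mulrBl.
- move=> f g _ [c ->]; exists (f a * c); apply/funext => x /=.
  case: (pselect (x = a)) => [->|xa]; first by rewrite chia !mulr1.
  by rewrite chin // !mulr0.
Qed.

Lemma key (I : set (X -> R)) a (f : X -> R) : ideal I -> I f -> f a <> 0 -> L a `<=` I.
Proof.
move=> [_ _ _ hM] If fa _ [c ->].
have -> : (fun x => c * ch a x) = (fun x => (c / f a) * ch a x) \* f.
  apply/funext => x /=; case: (pselect (x = a)) => [->|xa].
    by rewrite chia !mulr1 mulfVK //; apply/eqP.
  by rewrite chin // !mulr0 mul0r.
apply: hM => //; apply: L_CcF; exists (c / f a) => //.
Qed.

Lemma nonzero_ex (J : set (X -> R)) : nonzero_ideal J -> exists f a, J f /\ f a <> 0.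
Proof.
move=> [[_ J0 _ _] Jn]; apply: contrapT => hn; apply: Jn.
apply/seteqP; split => [f Jf|_ ->] //=.
apply/funext => x; apply: contrapT => fx; apply: hn; by exists f, x.
Qed.

Lemma L_nonzero a : nonzero_ideal (L a).
Proof.
split; first exact: L_ideal.
move=> h; have : [set (fun _ : X => 0 : R)] (ch a) by rewrite -h; exact: chi_L.
move=> /(congr1 (fun g => g a)); rewrite chia => /eqP; by rewrite oner_eq0.
Qed.

Lemma L_min a : minimal_ideal (L a).
Proof.
split; first exact: L_nonzero.
move=> J nJ JL; apply/seteqP; split => //.
have [f [x [Jf fx]]] := @nonzero_ex J nJ.
have [c fE] := JL _ Jf.
have xa : x = a.
  apply: contrapT => xa; apply: fx; by rewrite fE /= chin // mulr0.
subst x; exact: (@key J a f nJ.1 Jf fx).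
Qed.

Lemma min_L (I : set (X -> R)) : minimal_ideal I -> exists a, I = L a.
Proof.
move=> [nI hmin]; have [f [a [If fa]]] := @nonzero_ex I nI.
exists a; apply/esym/hmin; first exact: L_nonzero.
exact: (@key I a f nI.1 If fa).
Qed.

Lemma gen_L a : gen_ideal [set ch a] = L a.
Proof.
apply/seteqP; split.
  move=> f; apply; split; first exact: L_ideal.
  by move=> _ ->; exact: chi_L.
move=> _ [c ->] J [[_ _ _ hM] sJ].
have -> : (fun x => c * ch a x) = (fun _ => c) \* (ch a) by [].
by apply: hM; [exact: cst_CcF | exact: sJ].
Qed.


Definition Sf : set (X -> R) := [set f | CcF f /\ finite_set (~` Z f)].

Lemma S_ideal : ideal Sf.
Proof.
split.
- by move=> f [].
- split; first exact: cst_CcF.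
  apply: (@sub_finite_set _ _ set0); last exact: finite_set0.
  by move=> x /= /(_ erefl).
- move=> f g [_ ff] [_ fg].
  have fin : finite_set (~` Z (f \- g)).
    apply: (@sub_finite_set _ _ (~` Z f `|` ~` Z g)); last by rewrite finite_setU.
    move=> x /= h; apply: contrapT => /not_orP [/contrapT hf /contrapT hg].
    by apply: h; rewrite /Z /= in hf hg *; rewrite hf hg subr0.
  by split => //; exact: fs_CcF.
- move=> f g _ [_ fg].
  have fin : finite_set (~` Z (f \* g)).
    apply: (sub_finite_set _ fg) => x /= h hg; apply: h.
    by rewrite /Z /= in hg *; rewrite hg mulr0.
  by split => //; exact: fs_CcF.
Qed.

Lemma gen_ideal_ideal (S : set (X -> R)) :
  (exists J, ideal J /\ S `<=` J) -> ideal (gen_ideal S).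
Proof.
move=> [J0 [iJ0 sJ0]]; split.
- move=> f gf; case: (iJ0) => sub _ _ _; apply: sub; apply: gf; exact: (conj iJ0 sJ0).
- by move=> J [[_ ? _ _] _].
- move=> f g gf gg J [iJ sJ]; case: (iJ) => _ _ hB _; apply: hB; [apply: gf|apply: gg]; exact: (conj iJ sJ).
- move=> f g cf gg J [iJ sJ]; case: (iJ) => _ _ _ hM; apply: hM => //; apply: gg; exact: (conj iJ sJ).
Qed.

Lemma idealD (I : set (X -> R)) f g : ideal I -> I f -> I g -> I (f \+ g).
Proof.
move=> [_ I0 hB _] If Ig.
have := hB f _ If (hB _ g I0 Ig).
have -> // : f \- ((fun _ => 0) \- g) = f \+ g.
by apply/funext => x /=; rewrite sub0r opprK.
Qed.

Lemma socle_eq : @socle X R = Sf.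
Proof.
have Umin : \bigcup_(I in @minimal_ideal X R) I `<=` Sf.
  move=> f [I /min_L [a ->] Lf]; split; [exact: L_CcF Lf| exact: L_fs Lf].
have gI : ideal (@socle X R).
  by apply: gen_ideal_ideal; exists Sf; split => //; exact: S_ideal.
apply/seteqP; split.
  by move=> f; apply; split => //; exact: S_ideal.
move=> f [_ /finite_seqP [s hs]].
have : ~` Z f `<=` [set` s] by rewrite hs.
elim: s {hs} f => [|a s IH] f hf.
  have -> : f = (fun _ => 0).
    apply/funext => x; apply: contrapT => h; by have := hf x h.
  by case: gI.
pose g := f \- (fun x => f a * ch a x).
have -> : f = g \+ (fun x => f a * ch a x) by apply/funext => x; rewrite /g /= subrK.
apply: (@idealD _ g (fun x => f a * ch a x) gI).
  apply: IH => x /= gx.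
  case: (pselect (x = a)) => [xa|xa].
    by exfalso; apply: gx; rewrite /Z /g /= xa chia mulr1 subrr.
  have : ((~` Z f) x) by move=> fx; apply: gx; rewrite /Z /= in fx; rewrite /Z /g /= fx chin // mulr0 subr0.
  move/hf; rewrite /= in_cons => /orP [/eqP //|//].
move=> J [_ sJ]; apply: sJ; exists (L a); first exact: L_min.
by exists (f a).
Qed.

Lemma Zg (g : X -> R) a : g a <> 0 -> Z (fun x => ch a x * g x) = ~` [set a].
Proof.
move=> ga; apply/seteqP; split => x /=.
  by move=> h xa; subst x; apply: ga; rewrite /Z /= chia mul1r in h.
by move=> xa; rewrite /Z /= chin // mul0r.
Qed.


Lemma main_sec :
  (forall I : set (X -> R), nonzero_ideal I ->
     (minimal_ideal I <-> exists a : X, I = gen_ideal [set @chi X R a])) /\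
  (forall I : set (X -> R), nonzero_ideal I ->
     (minimal_ideal I <->
      exists A B : set X, A <> B /\ ZI I = [set A] `|` [set B])) /\
  (@socle X R = [set f | CcF f /\ finite_set (~` Z f)]) /\
  (essential_ideal (@socle X R) /\
   \bigcap_(f in @socle X R) Z f = set0).
Proof.
split.
  move=> I nI; split.
    by move=> /min_L [a ->]; exists a; rewrite gen_L.
  by move=> [a ->]; rewrite gen_L; exact: L_min.
split.
  move=> I nI; split.
    move=> /min_L [a ->]; exists setT, (~` [set a]); split.
      by move=> /(congr1 (fun P => P a)) /=; rewrite propeqE => -[+ _]; apply.
    apply/seteqP; split.
      move=> _ [f [c ->] <-] /=.
      case: (pselect (c = 0)) => [->|c0].
        by left; apply/seteqP; split => x //= _; rewrite /Z /= mul0r.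
      right; rewrite -(@Zg (fun _ => c) a c0); congr Z.
      by apply/funext => x; rewrite mulrC.
    move=> _ [->|->].
      exists (fun x => 0 * ch a x); first by exists 0.
      by apply/seteqP; split => x //= _; rewrite /Z /= mul0r.
    exists (fun x => 1 * ch a x); first by exists 1.
    have o1 : (1:R) <> 0 by apply/eqP; exact: oner_neq0.
    rewrite -(@Zg (fun _ => 1) a o1); congr Z.
    by apply/funext => x; rewrite mulrC.
  move=> [A [B [AB hZ]]].
  have [f [a [If fa]]] := @nonzero_ex I nI.
  have inZ : forall g, I g -> Z g = A \/ Z g = B.
    move=> g Ig; have : ZI I (Z g) by exists g.
    by rewrite hZ => -[->|->]; [left|right].
  case: (nI) => iI _; case: (iI) => _ I0 _ hM.
  suff -> : I = L a by exact: L_min.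
  apply/seteqP; split; last exact: (@key I a f iI If fa).
  move=> g Ig; exists (g a); apply/funext => x.
  case: (pselect (x = a)) => [->|xa]; first by rewrite chia mulr1.
  rewrite chin // mulr0; apply: contrapT => gx.
  have h0 := inZ _ I0.
  have h1 := inZ _ (hM _ _ (chi_CcF a) If).
  have h2 := inZ _ (hM _ _ (chi_CcF x) Ig).
  have e1 : Z (ch a \* f) = ~` [set a] by exact: Zg.
  have e2 : Z (ch x \* g) = ~` [set x] by exact: Zg.
  have e0 : Z (fun _ : X => (0:R)) = setT by apply/seteqP; split.
  rewrite e0 in h0; rewrite e1 in h1; rewrite e2 in h2.
  have d01 : setT <> ~` [set a].
    by move=> /(congr1 (fun P => P a)) /=; rewrite propeqE => -[+ _]; apply.
  have d02 : setT <> ~` [set x].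
    by move=> /(congr1 (fun P => P x)) /=; rewrite propeqE => -[+ _]; apply.
  have d12 : ~` [set a] <> ~` [set x].
    move=> /(congr1 (fun P => P a)) /=; rewrite propeqE => -[_ +].
    by apply => // ax; apply: xa.
  by case: h0 => h0; case: h1 => h1; case: h2 => h2; congruence.
have soc := socle_eq.
split; first exact: soc.
split.
  split; first by rewrite soc; exact: S_ideal.
  move=> J nJ; have [f [a [Jf fa]]] := @nonzero_ex J nJ.
  exists (ch a \* f); split; last split.
  - rewrite soc; have Lf : L a (ch a \* f).
      by exists (f a); apply/funext => x /=; case: (pselect (x = a)) => [->|xa];
        [rewrite chia mulr1 mul1r|rewrite chin // mulr0 mul0r].
    by split; [exact: L_CcF Lf|exact: L_fs Lf].
  - by case: nJ => -[_ _ _ hM] _; apply: hM => //; exact: chi_CcF.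
  - by move=> /(congr1 (fun h => h a)) /=; rewrite chia mul1r.
apply/seteqP; split => // x hx.
have : socle (ch x) by rewrite soc; split; [exact: L_CcF (chi_L x)|exact: L_fs (chi_L x)].
move=> /hx; rewrite /Z /= chia => /eqP; by rewrite oner_eq0.
Qed.

End S.

Theorem proposition3p16 (X : topologicalType) (R : realType)
  (hT1 : accessible_space X) :
  (* (i) *)
  (forall I : set (X -> R), nonzero_ideal I ->
     (minimal_ideal I <-> exists a : X, I = gen_ideal [set @chi X R a])) /\
  (* (ii) *)
  (forall I : set (X -> R), nonzero_ideal I ->
     (minimal_ideal I <->
      exists A B : set X, A <> B /\ ZI I = [set A] `|` [set B])) /\
  (* (iii) *)
  (@socle X R = [set f | CcF f /\ finite_set (~` Z f)]) /\
  (* (iv) *)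
  (essential_ideal (@socle X R) /\
   \bigcap_(f in @socle X R) Z f = set0).
Proof. exact: (@main_sec X R hT1). Qed.
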